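(* Let $\mathcal{H}$ be any undirected hypergraph on the vertex set $\{1,2,3\}$, and consider any network dynamical system on $\mathcal{H}$ with one-dimensional node states, smooth intrinsic dynamics $F$ and smooth, edge-dependent coupling functions $G_e$ (each invariant under permutations of its tail arguments). Then the resulting vector field on $\mathbb{R}^3$ is not equal to the Guckenheimer--Holmes vector field $$\dot x_1 = x_1 + a x_1^3 + b x_1x_2^2 + c x_1x_3^2,\quad \dot x_2 = x_2 + a x_2^3 + b x_2x_3^2 + c x_1^2x_2,\quad \dot x_3 = x_3 + a x_3^3 + b x_1^2x_3 + c x_2^2x_3$$ for any real parameters $a,b,c$ with $b\neq c$. In particular, the Guckenheimer--Holmes system cannot be realized for any parameters satisfying $a+b+c=-1$, $-\tfrac13<a<0$, $c<a<b<0$.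
   Context: A directed hypergraph on $\mathcal{V}=\{1,\dots,N\}$ is a set $\mathcal{E}$ of hyperedges $e=(T(e),H(e))$ with nonempty tail $T(e)\subseteq\mathcal{V}$ and head $H(e)\subseteq\mathcal{V}$. It is undirected if every hyperedge has the form $e=(A,A)$, $A\subseteq\mathcal V$ nonempty. A network dynamical system on $\mathcal{H}$ with one-dimensional node states is the ODE on $\mathbb{R}^N$ $$\dot x_k = F(x_k) + \sum_{e\in\mathcal{E}:\,k\in H(e)} G_e(x_k; x_{T(e)}),\qquad k=1,\dots,N,$$ where $F:\mathbb{R}\to\mathbb{R}$ is smooth, each $G_e:\mathbb{R}\times\mathbb{R}^{|T(e)|}\to\mathbb{R}$ is smooth, invariant under permutations of its last $|T(e)|$ arguments, and depends nontrivially on them; $x_{T(e)}$ denotes the vector of the $x_j$, $j\in T(e)$. (For an undirected edge $A$, node $k\in A$ thus receives $G_A(x_k;x_A)$, where $x_A$ includes $x_k$.) ''Realizing'' a vector field means that the network vector field equals it identically. *)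

(* Defs.v *)
From mathcomp Require Import all_boot all_order all_fingroup all_algebra.
From mathcomp Require Import all_classical all_reals all_analysis.
Import numFieldNormedType.Exports.
Set Implicit Arguments. Unset Strict Implicit. Unset Printing Implicit Defensive.
Import Order.TTheory GRing.Theory Num.Theory.
Local Open Scope ring_scope.

Definition iter_dir {R : realType} {V : normedModType R}
  (vs : seq V) (f : V -> R) : V -> R :=
  foldr (fun v g => 'D_v g) f vs.

Definition smooth {R : realType} {V : normedModType R} (f : V -> R) : Prop :=
  forall vs : seq V,
    continuous (iter_dir vs f) /\ (forall x v, derivable (iter_dir vs f) x v).

(* Vertex set {1,2,3} is modelled as 'I_3 = {0,1,2}.
   An undirected hypergraph is a set E of nonempty subsets A of 'I_3;
   the hyperedge A stands for (A, A). *)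
Definition undirected_hypergraph (E : {set {set 'I_3}}) : Prop :=
  forall A, A \in E -> A != finset.set0.

(* Coupling function of an edge A: G A : R x R^{|A|} -> R, the tail vector
   x_A being listed in increasing vertex order. *)
Definition coupling_family (R : realType) :=
  forall A : {set 'I_3}, (R * 'rV[R]_#|A|)%type -> R.

Definition admissible_coupling (R : realType) (n : nat)
  (g : (R * 'rV[R]_n)%type -> R) : Prop :=
  [/\ smooth g,
      (forall (s : 'S_n) (y : R) (w : 'rV[R]_n), g (y, col_perm s w) = g (y, w))
    & exists (y : R) (w w' : 'rV[R]_n), g (y, w) != g (y, w')].

Definition tail_vec (R : realType) (A : {set 'I_3}) (x : 'I_3 -> R) : 'rV[R]_#|A| :=
  \row_(i < #|A|) x (enum_val i).

Definition network_field (R : realType) (E : {set {set 'I_3}})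
  (F : R -> R) (G : coupling_family R) (x : 'I_3 -> R) (k : 'I_3) : R :=
  F (x k) + \sum_(A in E | k \in A) G A (x k, tail_vec A x).

(* The Guckenheimer--Holmes vector field (x_1,x_2,x_3 = x 0, x 1, x 2). *)
Definition gh_field (R : realType) (a b c : R) (x : 'I_3 -> R) (k : 'I_3) : R :=
  let x1 := x ord0 in let x2 := x (lift ord0 ord0) in let x3 := x ord_max in
  match val k with
  | 0%N => x1 + a * x1 ^+ 3 + b * x1 * x2 ^+ 2 + c * x1 * x3 ^+ 2
  | 1%N => x2 + a * x2 ^+ 3 + b * x2 * x3 ^+ 2 + c * x1 ^+ 2 * x2
  | _   => x3 + a * x3 ^+ 3 + b * x1 ^+ 2 * x3 + c * x2 ^+ 2 * x3
  end.

Definition realizes (R : realType) (E : {set {set 'I_3}}) (F : R -> R)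
  (G : coupling_family R) (V : ('I_3 -> R) -> 'I_3 -> R) : Prop :=
  forall x k, network_field E F G x k = V x k.

(* Main.v *)
Require Import Defs.
From mathcomp Require Import all_boot all_order all_fingroup all_algebra.
From mathcomp Require Import all_classical all_reals all_analysis.
Import numFieldNormedType.Exports.
Import Order.TTheory GRing.Theory Num.Theory.
From mathcomp Require Import lra.
Local Open Scope ring_scope.
Set Implicit Arguments. Unset Strict Implicit.

Lemma tail_perm (R : realType) (A : {set 'I_3}) (g : (R * 'rV[R]_#|A|)%type -> R)
  (sg : forall (s : 'S_#|A|) (y : R) (w : 'rV[R]_#|A|), g (y, col_perm s w) = g (y, w))
  (sigma : 'S_3) (x x' : 'I_3 -> R) (y : R) :
  (forall i, (sigma i \in A) = (i \in A)) -> (forall i, x' i = x (sigma i)) ->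
  g (y, tail_vec A x') = g (y, tail_vec A x).
Proof.
move=> inv xx.
case: (set_0Vmem A) => [A0|[a aA]].
  congr (g (y, _)); apply/matrixP => i j; exfalso.
  have := enum_valP j; move: (enum_val j) => z; by rewrite A0 inE.
have sinj : injective (fun i : 'I_#|A| => enum_rank_in aA (sigma (enum_val i))).
  move=> i j /enum_rank_in_inj; rewrite !inv !enum_valP => /(_ isT isT).
  by move/perm_inj/enum_val_inj.
rewrite -[RHS](sg (perm sinj)); congr (g (y, _)); apply/matrixP => i j.
by rewrite /tail_vec !mxE permE /= enum_rankK_in ?inv ?enum_valP // xx.
Qed.

Definition pt (R : realType) (r0 r1 r2 : R) : 'I_3 -> R :=
  fun i => match val i with 0%N => r0 | 1%N => r1 | _ => r2 end.

Arguments pt {R}.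

Definition i0 : 'I_3 := ord0.
Definition i1 : 'I_3 := lift ord0 ord0.
Definition i2 : 'I_3 := ord_max.

Lemma tperm_inv (A : {set 'I_3}) (i j : 'I_3) :
  (i \in A) = (j \in A) -> forall k, (tperm i j k \in A) = (k \in A).
Proof.
move=> e k; case: tpermP => [->|->|] //.
Qed.

Definition term (R : realType) (G : coupling_family R) (A : {set 'I_3}) (k : 'I_3) (x : 'I_3 -> R) :=
  if k \in A then G A (x k, tail_vec A x) else 0.
Arguments term {R}.

Lemma perA (R : realType) (G : coupling_family R) A (u p q : R) :
  admissible_coupling (G A) ->
  term G A i0 (pt u p q) - term G A i0 (pt u q p)
  - (term G A i1 (pt p u q) - term G A i1 (pt q u p))
  + (term G A i2 (pt p q u) - term G A i2 (pt q p u)) = 0.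
Proof.
case=> _ sg _.
have sw : forall (i j : 'I_3) (r0 r1 r2 s0 s1 s2 : R),
  (i \in A) = (j \in A) ->
  (forall k, pt s0 s1 s2 k = pt r0 r1 r2 (tperm i j k)) ->
  G A (u, tail_vec A (pt s0 s1 s2)) = G A (u, tail_vec A (pt r0 r1 r2)).
  move=> i j r0 r1 r2 s0 s1 s2 e h.
  exact: (tail_perm sg u (tperm_inv e) h).
have c : forall k : 'I_3, k = i0 \/ k = i1 \/ k = i2.
  by case=> [[|[|[|]]] H] //; [left|right;left|right;right]; apply/val_inj.
have hk : forall i j (r0 r1 r2 s0 s1 s2 : R),
  (forall k, i != k -> j != k -> pt s0 s1 s2 k = pt r0 r1 r2 k) ->
  pt s0 s1 s2 i = pt r0 r1 r2 j -> pt s0 s1 s2 j = pt r0 r1 r2 i ->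
  forall k, pt s0 s1 s2 k = pt r0 r1 r2 (tperm i j k).
  move=> i j r0 r1 r2 s0 s1 s2 h hi hj k.
  case: tpermP => [->|->|/eqP ki /eqP kj] //.
  by apply: h; rewrite eq_sym.
have P0 : forall r0 r1 r2 : R, pt r0 r1 r2 i0 = r0 by [].
have P1 : forall r0 r1 r2 : R, pt r0 r1 r2 i1 = r1 by [].
have P2 : forall r0 r1 r2 : R, pt r0 r1 r2 i2 = r2 by [].
have key : forall i j (r0 r1 r2 s0 s1 s2 : R),
  (i \in A) = (j \in A) ->
  (forall k, i != k -> j != k -> pt s0 s1 s2 k = pt r0 r1 r2 k) ->
  pt s0 s1 s2 i = pt r0 r1 r2 j -> pt s0 s1 s2 j = pt r0 r1 r2 i ->
  G A (u, tail_vec A (pt s0 s1 s2)) = G A (u, tail_vec A (pt r0 r1 r2)).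
  move=> i j r0 r1 r2 s0 s1 s2 e h1 h2 h3; apply: (sw i j) => //; exact: hk.
have E1 : (i0 \in A) = (i1 \in A) -> G A (u, tail_vec A (pt p u q)) = G A (u, tail_vec A (pt u p q)).
  move=> e; apply: (key i0 i1) => // k; case: (c k) => [->|[->|->]]; rewrite ?eqxx //.
have E2 : (i0 \in A) = (i1 \in A) -> G A (u, tail_vec A (pt q u p)) = G A (u, tail_vec A (pt u q p)).
  move=> e; apply: (key i0 i1) => // k; case: (c k) => [->|[->|->]]; rewrite ?eqxx //.
have E3 : (i0 \in A) = (i2 \in A) -> G A (u, tail_vec A (pt q p u)) = G A (u, tail_vec A (pt u p q)).
  move=> e; apply: (key i0 i2) => // k; case: (c k) => [->|[->|->]]; rewrite ?eqxx //.
have E4 : (i0 \in A) = (i2 \in A) -> G A (u, tail_vec A (pt p q u)) = G A (u, tail_vec A (pt u q p)).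
  move=> e; apply: (key i0 i2) => // k; case: (c k) => [->|[->|->]]; rewrite ?eqxx //.
have E5 : (i1 \in A) = (i2 \in A) -> G A (u, tail_vec A (pt p q u)) = G A (u, tail_vec A (pt p u q)).
  move=> e; apply: (key i1 i2) => // k; case: (c k) => [->|[->|->]]; rewrite ?eqxx //.
have E6 : (i1 \in A) = (i2 \in A) -> G A (u, tail_vec A (pt q p u)) = G A (u, tail_vec A (pt q u p)).
  move=> e; apply: (key i1 i2) => // k; case: (c k) => [->|[->|->]]; rewrite ?eqxx //.
have E7 : (i1 \in A) = (i2 \in A) -> G A (u, tail_vec A (pt u q p)) = G A (u, tail_vec A (pt u p q)).
  move=> e; apply: (key i1 i2) => // k; case: (c k) => [->|[->|->]]; rewrite ?eqxx //.
have E8 : (i0 \in A) = (i2 \in A) -> G A (u, tail_vec A (pt q u p)) = G A (u, tail_vec A (pt p u q)).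
  move=> e; apply: (key i0 i2) => // k; case: (c k) => [->|[->|->]]; rewrite ?eqxx //.
have E9 : (i0 \in A) = (i1 \in A) -> G A (u, tail_vec A (pt q p u)) = G A (u, tail_vec A (pt p q u)).
  move=> e; apply: (key i0 i1) => // k; case: (c k) => [->|[->|->]]; rewrite ?eqxx //.
rewrite /term !P0 !P1 !P2.
case A0: (i0 \in A); case A1: (i1 \in A); case A2: (i2 \in A).
- rewrite E1 ?E2 ?E3 ?E4 ?E7 ?A0 ?A1 ?A2 //; lra.
- rewrite E1 ?E2 ?A0 ?A1 ?A2 //; lra.
- rewrite E3 ?E4 ?A0 ?A1 ?A2 //; lra.
- rewrite E7 ?A0 ?A1 ?A2 //; lra.
- rewrite E5 ?E6 ?A0 ?A1 ?A2 //; lra.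
- rewrite E8 ?A0 ?A1 ?A2 //; lra.
- rewrite E9 ?A0 ?A1 ?A2 //; lra.
- lra.
Qed.

Lemma part1 (R : realType) (a b c : R) : b != c ->
     forall (E : {set {set 'I_3}}) (F : R -> R) (G : coupling_family R),
       undirected_hypergraph E -> smooth F ->
       (forall A, A \in E -> admissible_coupling (G A)) ->
       ~ realizes E F G (gh_field a b c).
Proof.
move=> bc E F G _ _ adm H.
have NF : forall x k, network_field E F G x k = F (x k) + \sum_(A in E) term G A k x.
  by move=> x k; rewrite /network_field big_mkcondr.
set S := fun k x => \sum_(A in E) term G A k x.
have Z : S i0 (pt 1 1 0) - S i0 (pt 1 0 1) - (S i1 (pt 1 1 0) - S i1 (pt 0 1 1))
   + (S i2 (pt 1 0 1) - S i2 (pt 0 1 1)) = 0.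
  have : \sum_(A in E) (term G A i0 (pt 1 1 0) - term G A i0 (pt 1 0 1)
     - (term G A i1 (pt 1 1 0) - term G A i1 (pt 0 1 1))
     + (term G A i2 (pt 1 0 1) - term G A i2 (pt 0 1 1))) = 0.
    by apply: big1 => A /adm hA; apply: perA.
  by rewrite big_split /= !sumrB.
have e1 : F 1 + S i0 (pt 1 1 0) = 1 + a + b.
  move: (H (pt 1 1 0) i0); rewrite NF /gh_field /= => ->.
  rewrite /pt /= !(expr1n, expr0n, mulr1, mul1r, mulr0, mul0r, addr0) /=; lra.
have e2 : F 1 + S i0 (pt 1 0 1) = 1 + a + c.
  move: (H (pt 1 0 1) i0); rewrite NF /gh_field /= => ->.
  rewrite /pt /= !(expr1n, expr0n, mulr1, mul1r, mulr0, mul0r, addr0) /=; lra.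
have e3 : F 1 + S i1 (pt 1 1 0) = 1 + a + c.
  move: (H (pt 1 1 0) i1); rewrite NF /gh_field /= => ->.
  rewrite /pt /= !(expr1n, expr0n, mulr1, mul1r, mulr0, mul0r, addr0) /=; lra.
have e4 : F 1 + S i1 (pt 0 1 1) = 1 + a + b.
  move: (H (pt 0 1 1) i1); rewrite NF /gh_field /= => ->.
  rewrite /pt /= !(expr1n, expr0n, mulr1, mul1r, mulr0, mul0r, addr0) /=; lra.
have e5 : F 1 + S i2 (pt 1 0 1) = 1 + a + b.
  move: (H (pt 1 0 1) i2); rewrite NF /gh_field /= => ->.
  rewrite /pt /= !(expr1n, expr0n, mulr1, mul1r, mulr0, mul0r, addr0) /=; lra.
have e6 : F 1 + S i2 (pt 0 1 1) = 1 + a + c.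
  move: (H (pt 0 1 1) i2); rewrite NF /gh_field /= => ->.
  rewrite /pt /= !(expr1n, expr0n, mulr1, mul1r, mulr0, mul0r, addr0) /=; lra.
have : b = c by lra.
by move=> bc'; move: bc; rewrite bc' eqxx.
Qed.

Theorem mainTheorem1 (R : realType) :
  (forall (a b c : R), b != c ->
     forall (E : {set {set 'I_3}}) (F : R -> R) (G : coupling_family R),
       undirected_hypergraph E -> smooth F ->
       (forall A, A \in E -> admissible_coupling (G A)) ->
       ~ realizes E F G (gh_field a b c))
  /\
  (forall (a b c : R), a + b + c = -1 -> - 3^-1 < a < 0 -> c < a -> a < b -> b < 0 ->
     forall (E : {set {set 'I_3}}) (F : R -> R) (G : coupling_family R),
       undirected_hypergraph E -> smooth F ->
       (forall A, A \in E -> admissible_coupling (G A)) ->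
       ~ realizes E F G (gh_field a b c)).
Proof.
split; first exact: part1.
move=> a b c _ _ ca ab _; apply: part1.
by rewrite gt_eqF // (lt_trans ca ab).
Qed.
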